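(* Let $s$ be a program with semantics $[\![s]\!]\subseteq\Sigma\times\Sigma$, $Q$ a predicate on $\Sigma$, and $\mathcal{L}$ a language of predicates on $\Sigma$, and let $\overline{\mathcal{L}}=\{\neg\varphi\mid\varphi\in\mathcal{L}\}$. Then the $\mathcal{L}$-weakest liberal precondition $\mathit{wlp}_{\mathcal{L}}(s,Q)$ is semantically equivalent to the negation of any best $\overline{\mathcal{L}}$-conjunction of the query $\Psi(\sigma):=\exists\sigma'.\,\neg Q(\sigma')\wedge[\![s]\!](\sigma,\sigma')$ (whose free variable is $\sigma$ and hidden variable is $\sigma'$).
   Context: $\Sigma$ is a set of program states; $[\![s]\!](\sigma,\sigma')$ holds iff $s$ started in $\sigma$ can terminate in $\sigma'$. The Hoare triple $\{P\}s\{Q\}$ holds iff $\forall\sigma,\sigma'.\,P(\sigma)\wedge[\![s]\!](\sigma,\sigma')\Rightarrow Q(\sigma')$. For predicates, $[\![\varphi]\!]$ is its set of models. $\mathit{wlp}_{\mathcal{L}}(s,Q)$ is the (possibly infinite) disjunction $\bigvee_i P_i$ of all $P_i\in\mathcal{L}$ such that (i) $\{P_i\}s\{Q\}$ holds and (ii) there is no $P\in\mathcal{L}$ with $[\![P_i]\!]\subset[\![P]\!]$ and $\{P\}s\{Q\}$. For a query $\Psi(v)=\exists h.\,\psi(v,h)$ and a language $\mathcal{L}'$: $\varphi\in\mathcal{L}'$ is an $\mathcal{L}'$-consequence if $\forall v.\,\Psi(v)\Rightarrow\varphi(v)$, and a strongest one if no $\mathcal{L}'$-consequence $\varphi'$ has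 $[\![\varphi']\!]\subset[\![\varphi]\!]$. A set $\Pi\subseteq\mathcal{L}'$ forms a best $\mathcal{L}'$-conjunction $\bigwedge\Pi$ iff each element is a strongest $\mathcal{L}'$-consequence, distinct elements are incomparable (neither model set contains the other), and $[\![\bigwedge\Pi]\!]\subseteq[\![\varphi]\!]$ for every strongest $\mathcal{L}'$-consequence $\varphi$. *)

(* Defs.v *)
(* Predicates on a state space Sigma are identified with their
   sets of models, i.e. Sigma -> Prop; a language is a set of predicates. *)

Definition pred (Sigma : Type) := Sigma -> Prop.
Definition language (Sigma : Type) := pred Sigma -> Prop.

Definition incl {Sigma : Type} (A B : pred Sigma) : Prop :=
  forall x, A x -> B x.

Definition strict_incl {Sigma : Type} (A B : pred Sigma) : Prop :=
  incl A B /\ exists x, B x /\ ~ A x.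

Definition hoare {Sigma : Type} (P : pred Sigma) (s : Sigma -> Sigma -> Prop)
  (Q : pred Sigma) : Prop :=
  forall sigma sigma', P sigma -> s sigma sigma' -> Q sigma'.

Definition wlp {Sigma : Type} (L : language Sigma) (s : Sigma -> Sigma -> Prop)
  (Q : pred Sigma) : pred Sigma :=
  fun sigma => exists P, L P /\ hoare P s Q /\
    ~ (exists P', L P' /\ strict_incl P P' /\ hoare P' s Q) /\ P sigma.

Definition neg_lang {Sigma : Type} (L : language Sigma) : language Sigma :=
  fun phi => exists psi, L psi /\ phi = (fun sigma => ~ psi sigma).

Definition consequence {Sigma : Type} (L' : language Sigma) (Psi : pred Sigma)
  (phi : pred Sigma) : Prop :=
  L' phi /\ forall v, Psi v -> phi v.

Definition strongest_consequence {Sigma : Type} (L' : language Sigma)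
  (Psi : pred Sigma) (phi : pred Sigma) : Prop :=
  consequence L' Psi phi /\
  ~ (exists phi', consequence L' Psi phi' /\ strict_incl phi' phi).

Definition big_conj {Sigma : Type} (Pi : pred Sigma -> Prop) : pred Sigma :=
  fun v => forall phi, Pi phi -> phi v.

Definition best_conjunction {Sigma : Type} (L' : language Sigma)
  (Psi : pred Sigma) (Pi : pred Sigma -> Prop) : Prop :=
  (forall phi, Pi phi -> strongest_consequence L' Psi phi) /\
  (forall phi1 phi2, Pi phi1 -> Pi phi2 -> phi1 <> phi2 ->
      ~ incl phi1 phi2 /\ ~ incl phi2 phi1) /\
  (forall phi, strongest_consequence L' Psi phi -> incl (big_conj Pi) phi).

(* Main.v *)
Require Import Defs.
From Stdlib Require Import Classical.

Theorem mainTheorem4 (Sigma : Type) (s : Sigma -> Sigma -> Prop)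
  (Q : pred Sigma) (L : language Sigma) (Pi : pred Sigma -> Prop) :
  best_conjunction (neg_lang L)
    (fun sigma => exists sigma', ~ Q sigma' /\ s sigma sigma') Pi ->
  forall sigma, wlp L s Q sigma <-> ~ big_conj Pi sigma.
Proof.
  intros [H1 [_ H3]] sigma. split.
  - intros [P [LP [HP [Hmax Ps]]]] Hb.
    assert (Hs : strongest_consequence (neg_lang L)
      (fun sigma => exists sigma', ~ Q sigma' /\ s sigma sigma')
      (fun x => ~ P x)).
    { split.
      - split. exists P; split; auto.
        intros v [v' [Hq Hsv]] Pv. apply Hq. exact (HP v v' Pv Hsv).
      - intros [phi' [[[psi' [Lpsi' ->]] Hc] [Hi [x [Hx1 Hx2]]]]].
        apply Hmax. exists psi'. split; [exact Lpsi'|]. split.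
        + split.
          * intros y Py. apply NNPP. intro Hn. exact (Hi y Hn Py).
          * exists x. split; [apply NNPP; exact Hx2 | exact Hx1].
        + intros a b Pa Sab. apply NNPP. intro Hq.
          exact (Hc a (ex_intro _ b (conj Hq Sab)) Pa). }
    exact (H3 _ Hs sigma Hb Ps).
  - intros Hnb. apply not_all_ex_not in Hnb. destruct Hnb as [phi Hphi].
    apply imply_to_and in Hphi. destruct Hphi as [Pphi Hn].
    destruct (H1 phi Pphi) as [[[psi [Lpsi Heq]] Hc] Hmin]. subst phi.
    exists psi. split; [exact Lpsi|]. split; [|split].
    + intros a b Pa Sab. apply NNPP. intro Hq.
      exact (Hc a (ex_intro _ b (conj Hq Sab)) Pa).
    + intros [P' [LP' [[Hi [x [Hx1 Hx2]]] HP']]].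
      apply Hmin. exists (fun y => ~ P' y). split.
      * split. exists P'; split; auto.
        intros v [v' [Hq Hsv]] Pv. apply Hq. exact (HP' v v' Pv Hsv).
      * split.
        -- intros y Hy Py. exact (Hy (Hi y Py)).
        -- exists x. split; [exact Hx2 | intro H; exact (H Hx1)].
    + apply NNPP. exact Hn.
Qed.
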